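(* Fix $N\ge 3$. For $(p_0,p_1,p_3)\in(0,1)^3$ let $\mu_B:=\mu(p_0,p_1,p_1,p_3)$ and $\mu_C:=\mu\big((1/2+p_0)/2,(1/2+p_1)/2,(1/2+p_1)/2,(1/2+p_3)/2\big)$, with $\mu$ as defined in the context. Call $(p_0,p_1,p_3)$ a point of the Parrondo region if $\mu_B\le 0$ and $\mu_C>0$, and a point of the anti-Parrondo region if $\mu_B\ge 0$ and $\mu_C<0$. With $q_m:=1-p_m$ for $m=0,1,3$, the vector $(p_0,p_1,p_3)$ belongs to the Parrondo region if and only if $(q_3,q_1,q_0)$ belongs to the anti-Parrondo region. In particular, the Parrondo region and the anti-Parrondo region have the same (Lebesgue) volume.
   Context: Model: $N\ge 3$ players labeled $1,\ldots,N$ sit in a circle (indices mod $N$). The state space is $\Sigma=\{0,1\}^N$, with $x_i=1$ meaning player $i$ won his most recent game. For $\bm x\in\Sigma$ let $m_i(\bm x):=2x_{i-1}+x_{i+1}$ and let $\bm x^i$ be $\bm x$ with the $i$th coordinate flipped. Given $r_0,r_1,r_2,r_3\in(0,1)$ (with $s_m:=1-r_m$), each turn a uniformly random player $i$ tosses a coin with heads probability $r_{m_i(\bm x)}$, winning one unit on heads (status becomes $1$) and losing one unit on tails (status becomes $0$). This gives the irreducible aperiodic Markov chain on $\Sigma$ with $P(\bm x,\bm x^i)=N^{-1}r_{m_i(\bm x)}$ if $x_i=0$, $=N^{-1}s_{m_i(\bm x)}$ if $x_i=1$, and $P(\bm x,\bm x)=N^{-1}\big(\sum_{i:x_i=0}s_{m_i(\bm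 x)}+\sum_{i:x_i=1}r_{m_i(\bm x)}\big)$; let $\bm\pi$ be its stationary distribution and define the mean profit per turn $$\mu(r_0,r_1,r_2,r_3):=\sum_{\bm x\in\Sigma}\pi(\bm x)\sum_{i=1}^N N^{-1}\big[r_{m_i(\bm x)}-s_{m_i(\bm x)}\big],$$ the almost-sure limit of $S_n/n$ for the ensemble's cumulative profit $S_n$. Game $A$ uses a fair coin ($p=1/2$) for every player; game $B$ uses $(p_0,p_1,p_1,p_3)$; game $C=\tfrac12(A+B)$ (a fair coin toss decides which game is played each turn) therefore corresponds to parameters $r_m=(1/2+p_m)/2$. *)

(* Defs.v *)
From HB Require Import structures.
From mathcomp Require Import all_boot all_order all_algebra.
From mathcomp Require Import boolp classical_sets.
Set Implicit Arguments. Unset Strict Implicit. Unset Printing Implicit Defensive.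
Import Order.TTheory GRing.Theory Num.Theory.
Local Open Scope ring_scope.

Section Model.
Variables (R : realFieldType) (N : nat).

(* states: x : 'I_N -> bool, x i = true means player i won his last game *)
Definition state := {ffun 'I_N -> bool}.

Definition mi (x : state) (i : 'I_N) : nat :=
  (2 * x (ord_pred i) + x (ordS i))%N.

Definition flip (x : state) (i : 'I_N) : state :=
  [ffun j => if j == i then ~~ x i else x j].

Definition rr (r0 r1 r2 r3 : R) (m : nat) : R :=
  match m with 0 => r0 | 1 => r1 | 2 => r2 | _ => r3 end.

(* transition probability: a uniformly random player i is chosen; he wins
   (status 1) w.p. r_{m_i(x)} and loses (status 0) w.p. s_{m_i(x)} = 1 - r_{m_i(x)} *)
Definition trans (r0 r1 r2 r3 : R) (x y : state) : R :=
  (N%:R)^-1 * \sum_(i < N)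
    (let r := rr r0 r1 r2 r3 (mi x i) in
     ((y == flip x i)%:R * (if x i then 1 - r else r)
      + (y == x)%:R * (if x i then r else 1 - r))).

Definition stationary (r0 r1 r2 r3 : R) (pi : {ffun state -> R}) : Prop :=
  (forall x, 0 <= pi x) /\ \sum_x pi x = 1 /\
  forall y, \sum_x pi x * trans r0 r1 r2 r3 x y = pi y.

(* the stationary distribution (unique, the chain being irreducible) *)
Definition statdist (r0 r1 r2 r3 : R) : {ffun state -> R} :=
  xget [ffun => 0] [set pi | stationary r0 r1 r2 r3 pi].

Definition mu (r0 r1 r2 r3 : R) : R :=
  \sum_x statdist r0 r1 r2 r3 x *
    \sum_(i < N) (N%:R)^-1 *
      (rr r0 r1 r2 r3 (mi x i) - (1 - rr r0 r1 r2 r3 (mi x i))).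

Definition muB (p0 p1 p3 : R) : R := mu p0 p1 p1 p3.
Definition muC (p0 p1 p3 : R) : R :=
  mu ((2^-1 + p0) / 2) ((2^-1 + p1) / 2) ((2^-1 + p1) / 2) ((2^-1 + p3) / 2).

Definition parrondo (p0 p1 p3 : R) : Prop :=
  muB p0 p1 p3 <= 0 /\ 0 < muC p0 p1 p3.
Definition anti_parrondo (p0 p1 p3 : R) : Prop :=
  0 <= muB p0 p1 p3 /\ muC p0 p1 p3 < 0.

End Model.

(* Main.v *)
Require Import Defs.
From HB Require Import structures.
From mathcomp Require Import all_boot all_order all_algebra.
From mathcomp Require Import boolp classical_sets.
From mathcomp Require Import ring lra.
Set Implicit Arguments. Unset Strict Implicit. Unset Printing Implicit Defensive.
Import Order.TTheory GRing.Theory Num.Theory.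
Local Open Scope ring_scope.

Section Uniq.
Variables (R : realFieldType) (T : finType) (P : T -> T -> R).
Hypothesis P0 : forall x y, 0 <= P x y.
Hypothesis Prow : forall x, \sum_y P x y = 1.
Hypothesis conn : forall (Z : pred T),
  (forall x y, Z y -> 0 < P x y -> Z x) -> forall y x, Z y -> Z x.

Definition statn (v : T -> R) := forall y, \sum_x v x * P x y = v y.

Lemma abs_stat v : statn v -> statn (fun x => `|v x|).
Proof.
move=> hv.
have ge : forall y, `|v y| <= \sum_x `|v x| * P x y.
  move=> y; rewrite -{1}hv; apply: le_trans (ler_norm_sum _ _ _) _.
  by apply: ler_sum => x _; rewrite normrM (ger0_norm (P0 _ _)).
have tot : \sum_y (\sum_x `|v x| * P x y - `|v y|) = 0.
  rewrite sumrB exchange_big /=.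
  under eq_bigr => x _ do rewrite -mulr_sumr Prow mulr1.
  by rewrite subrr.
move=> y; apply/eqP; rewrite -subr_eq0; apply/eqP.
move/psumr_eq0P: tot => -> // z _; by rewrite subr_ge0.
Qed.

Lemma lin_stat v w (a b : R) : statn v -> statn w ->
  statn (fun x => a * v x + b * w x).
Proof.
move=> hv hw y.
under eq_bigr => x _ do rewrite mulrDl -!mulrA.
by rewrite big_split /= -!mulr_sumr hv hw.
Qed.

Lemma nonneg_dich w : (forall x, 0 <= w x) -> statn w ->
  (forall x, w x = 0) \/ (forall x, 0 < w x).
Proof.
move=> w0 hw.
case: (pickP (fun x => w x == 0)) => [y /eqP wy0 | H]; last first.
  by right=> x; rewrite lt0r H w0.
left=> x; apply/eqP.
apply: (conn (Z := fun x => w x == 0) _ (y := y)); last by apply/eqP.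
move=> x' y' /eqP zy pxy.
move: (hw y'); rewrite zy => /psumr_eq0P h.
have : w x' * P x' y' = 0 by apply: h => // z _; apply: mulr_ge0.
by move/eqP; rewrite mulf_eq0 (gt_eqF pxy) orbF.
Qed.

Lemma stat_uniq (pi sg : T -> R) :
  (forall x, 0 <= pi x) -> \sum_x pi x = 1 -> statn pi ->
  (forall x, 0 <= sg x) -> \sum_x sg x = 1 -> statn sg ->
  forall x, pi x = sg x.
Proof.
move=> _ s1 hpi _ s2 hsg.
set v := fun x => pi x - sg x.
have hv : statn v.
  move=> y; rewrite /v; under eq_bigr => x _ do rewrite mulrBl.
  by rewrite sumrB hpi hsg.
have sv : \sum_x v x = 0 by rewrite sumrB s1 s2 subrr.
have ha := abs_stat hv.
have hp := lin_stat (2^-1) (2^-1) ha hv.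
have hn := lin_stat (2^-1) (-2^-1) ha hv.
have [x0 _] : exists x0 : T, true.
  case: (pickP (fun _ : T => true)) => [x _|H]; first by exists x.
  by move: s1; rewrite big_pred0 // => /eqP; rewrite eq_sym oner_eq0.
suff vz : forall x, v x = 0 by move=> x; apply/eqP; rewrite -subr_eq0; apply/eqP; exact: vz.
have sz : forall u : T -> R, (forall x, 0 <= u x) -> \sum_x u x = 0 -> forall x, u x = 0.
  by move=> u u0 /psumr_eq0P h x; apply: h.
have nb : forall x, `|v x| + v x >= 0 /\ `|v x| - v x >= 0.
  move=> x; have := ler_norm (v x); have := ler_norm (- v x); rewrite normrN; split; lra.
have hp0 : forall x, 0 <= 2^-1 * `|v x| + 2^-1 * v x.
  by move=> x; have := nb x; lra.
have hn0 : forall x, 0 <= 2^-1 * `|v x| + - 2^-1 * v x.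
  by move=> x; have := nb x; lra.
case: (nonneg_dich hp0 hp) => Hp.
- have vle : forall x, v x <= 0.
    move=> z; have := Hp z; have := nb z; lra.
  move=> x.
  have := sz (fun x => - v x) (fun z => ltac:(have := vle z; lra)).
  by rewrite sumrN sv oppr0 => /(_ erefl x) /eqP; rewrite oppr_eq0 => /eqP.
- case: (nonneg_dich hn0 hn) => Hn.
  + have vge : forall x, 0 <= v x.
      move=> z; have := Hn z; have := nb z; lra.
    by apply: (sz v vge sv).
  + have := Hp x0; have := Hn x0; have := nb x0.
    case: (lerP 0 (v x0)) => h.
    * rewrite (ger0_norm h); lra.
    * rewrite (ltr0_norm h); lra.
Qed.
End Uniq.

Section M.
Variables (R : realFieldType) (N : nat).

Lemma flip_flip (x : state N) i : flip (flip x i) i = x.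
Proof. by apply/ffunP => j; rewrite !ffunE; case: eqP => [->|]; rewrite ?eqxx ?negbK. Qed.

Lemma flip_neq (x : state N) i : (x == flip x i) = false.
Proof. apply/negbTE/eqP => /ffunP /(_ i); rewrite ffunE eqxx; by case: (x i). Qed.

Lemma flip_path (Z : pred (state N)) :
  (forall y i, Z y -> Z (flip y i)) -> forall y x, Z y -> Z x.
Proof.
move=> hZ y x.
move Hn : #|[pred j | x j != y j]| => n.
elim: n y Hn => [|n IH] y Hn Zy.
  suff -> : x = y by [].
  apply/ffunP => j; apply/eqP; apply: negbNE; apply/negP => hj.
  by move/card0_eq: Hn => /(_ j) /=; rewrite inE hj.
case: (pickP [pred j | x j != y j]) => [i hi|H]; last first.
  by move: Hn; rewrite (eq_card0 H).
apply: (IH (flip y i)); last exact: hZ.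
move: Hn; rewrite (cardD1 i) inE; move: (hi); rewrite /= => ->; rewrite add1n => -[<-]; apply: eq_card => j.
rewrite !inE /= ffunE; case: (eqVneq j i) => [->|nji] /=.
  by move: hi; rewrite /=; case: (x i); case: (y i).
by [].
Qed.

Section P.
Variables (r0 r1 r2 r3 : R).
Hypotheses (h0 : 0 < r0 < 1) (h1 : 0 < r1 < 1) (h2 : 0 < r2 < 1) (h3 : 0 < r3 < 1).

Lemma rr_bd m : 0 < rr r0 r1 r2 r3 m < 1.
Proof. by case: m => [|[|[|m]]]. Qed.

Lemma trans_ge0 x y : 0 <= trans (N:=N) r0 r1 r2 r3 x y.
Proof.
rewrite /trans; apply: mulr_ge0; first by rewrite invr_ge0.
apply: sumr_ge0 => i _ /=.
have := rr_bd (mi x i); set r := rr _ _ _ _ _ => hr.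
apply: addr_ge0; apply: mulr_ge0 => //; case: (x i); lra.
Qed.

Lemma sum_ind (a : state N) (c : R) : \sum_y (y == a)%:R * c = c.
Proof.
rewrite (bigD1 a) //= eqxx mul1r big1 ?addr0 // => y /negbTE ->.
by rewrite mul0r.
Qed.

Lemma trans_row x : (0 < N)%N -> \sum_y trans (N:=N) r0 r1 r2 r3 x y = 1.
Proof.
move=> N0; rewrite /trans -mulr_sumr exchange_big /=.
under eq_bigr => i _ do rewrite big_split /= !sum_ind.
have -> : \sum_(i < N) ((if x i then 1 - rr r0 r1 r2 r3 (mi x i) else rr r0 r1 r2 r3 (mi x i)) +
    (if x i then rr r0 r1 r2 r3 (mi x i) else 1 - rr r0 r1 r2 r3 (mi x i))) = \sum_(i < N) 1.
  by apply: eq_bigr => i _; case: (x i); ring.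
by rewrite sumr_const card_ord mulVf // pnatr_eq0 -lt0n.
Qed.

Lemma trans_flip_pos y i : 0 < trans (N:=N) r0 r1 r2 r3 (flip y i) y.
Proof.
have N0 : (0 < N)%N by apply: (leq_ltn_trans (leq0n i)); exact: ltn_ord.
rewrite /trans; apply: mulr_gt0; first by rewrite invr_gt0 ltr0n.
rewrite (bigD1 i) //=.
set Sr := (X in (_ + X)%R); set Fi := (X in (X + Sr)%R).
suff [A B] : 0 < Fi /\ 0 <= Sr by lra.
split; last first.
  apply: sumr_ge0 => j _ /=.
  have := rr_bd (mi (flip y i) j); set r := rr _ _ _ _ _ => hr.
  apply: addr_ge0; apply: mulr_ge0 => //; case: (flip y i j); lra.
rewrite /Fi flip_flip eqxx flip_neq mul0r addr0 mul1r.
have := rr_bd (mi (flip y i) i); set r := rr _ _ _ _ _ => hr.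
by case: (flip y i i); lra.
Qed.

Lemma trans_conn (Z : pred (state N)) :
  (forall x y, Z y -> 0 < trans (N:=N) r0 r1 r2 r3 x y -> Z x) -> forall y x, Z y -> Z x.
Proof.
move=> hZ; apply: flip_path => y i Zy; apply: (hZ _ y Zy); exact: trans_flip_pos.
Qed.

Lemma stat_unique pi sg : (0 < N)%N ->
  stationary (N:=N) r0 r1 r2 r3 pi -> stationary (N:=N) r0 r1 r2 r3 sg -> pi = sg.
Proof.
move=> N0 [p0 [p1 p2]] [s0 [s1 s2]]; apply/ffunP => x.
exact: (stat_uniq (@trans_ge0) (@trans_row^~ N0) trans_conn p0 p1 p2 s0 s1 s2).
Qed.
End P.
End M.

Section C.
Variables (R : realFieldType) (N : nat).
Definition compl (x : state N) : state N := [ffun j => ~~ x j].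
Lemma compl_inv x : compl (compl x) = x.
Proof. by apply/ffunP => j; rewrite !ffunE negbK. Qed.
Lemma compl_inj : injective compl.
Proof. exact: can_inj compl_inv. Qed.
Lemma compl_flip x i : compl (flip x i) = flip (compl x) i.
Proof. by apply/ffunP => j; rewrite !ffunE; case: eqP. Qed.

Variables (r0 r1 r2 r3 s0 s1 s2 s3 : R).
Hypothesis hd : [/\ s0 = 1 - r3, s1 = 1 - r2, s2 = 1 - r1 & s3 = 1 - r0].

Lemma rr_compl x i : rr s0 s1 s2 s3 (mi (compl x) i) = 1 - rr r0 r1 r2 r3 (mi x i).
Proof.
case: hd => -> -> -> ->.
rewrite /mi !ffunE; case: (x (ord_pred i)); case: (x (ordS i)) => /=; ring.
Qed.

Lemma trans_compl x y : trans s0 s1 s2 s3 (compl x) (compl y) = trans r0 r1 r2 r3 x y.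
Proof.
rewrite /trans; congr (_ * _); apply: eq_bigr => i _ /=.
rewrite rr_compl -compl_flip !(inj_eq compl_inj) ffunE.
by case: (x i) => /=; ring.
Qed.

Definition ctr (pi : {ffun state N -> R}) : {ffun state N -> R} := [ffun y => pi (compl y)].

Lemma stat_compl pi : stationary r0 r1 r2 r3 pi -> stationary s0 s1 s2 s3 (ctr pi).
Proof.
move=> [p0 [p1 p2]]; split; first by move=> x; rewrite ffunE.
split.
  by rewrite (reindex_inj compl_inj) /=; under eq_bigr => x _ do rewrite ffunE compl_inv.
move=> y; rewrite ffunE -p2 (reindex_inj compl_inj) /=; apply: eq_bigr => x _.
by rewrite ffunE compl_inv -trans_compl compl_inv.
Qed.

Lemma mu_compl pi : 
  \sum_x ctr pi x * \sum_(i < N) (N%:R)^-1 *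
      (rr s0 s1 s2 s3 (mi x i) - (1 - rr s0 s1 s2 s3 (mi x i)))
  = - \sum_x pi x * \sum_(i < N) (N%:R)^-1 *
      (rr r0 r1 r2 r3 (mi x i) - (1 - rr r0 r1 r2 r3 (mi x i))).
Proof.
rewrite (reindex_inj compl_inj) /= -sumrN; apply: eq_bigr => x _.
rewrite ffunE compl_inv -mulrN -sumrN; congr (_ * _); apply: eq_bigr => i _.
rewrite rr_compl; ring.
Qed.
End C.

Lemma dual_sym (R : realFieldType) (r0 r1 r2 r3 s0 s1 s2 s3 : R) :
  [/\ s0 = 1 - r3, s1 = 1 - r2, s2 = 1 - r1 & s3 = 1 - r0] ->
  [/\ r0 = 1 - s3, r1 = 1 - s2, r2 = 1 - s1 & r3 = 1 - s0].
Proof. by case=> -> -> -> ->; split; ring. Qed.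

Lemma mu_dual (R : realFieldType) (N : nat) (r0 r1 r2 r3 s0 s1 s2 s3 : R) :
  (0 < N)%N ->
  0 < r0 < 1 -> 0 < r1 < 1 -> 0 < r2 < 1 -> 0 < r3 < 1 ->
  [/\ s0 = 1 - r3, s1 = 1 - r2, s2 = 1 - r1 & s3 = 1 - r0] ->
  mu N s0 s1 s2 s3 = - mu N r0 r1 r2 r3.
Proof.
move=> N0 h0 h1 h2 h3 hd.
have hd' := dual_sym hd.
have [e0 e1 e2 e3] : [/\ 0 < s0 < 1, 0 < s1 < 1, 0 < s2 < 1 & 0 < s3 < 1].
  by case: hd => -> -> -> ->; split; lra.
rewrite /mu /statdist.
case: (pselect (exists pi, stationary (N:=N) r0 r1 r2 r3 pi)) => [[pi hpi]|np].
  rewrite (@xget_unique _ _ _ pi hpi); last first.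
    by move=> y hy; apply: (stat_unique h0 h1 h2 h3 N0).
  rewrite (@xget_unique _ _ _ (ctr pi) (stat_compl hd hpi)); last first.
    by move=> y hy; apply: (stat_unique e0 e1 e2 e3 N0 hy (stat_compl hd hpi)).
  exact: mu_compl.
rewrite !xgetPN.
- by rewrite !big1 ?oppr0 // => x _; rewrite ffunE mul0r.
- by move=> pi hpi; apply: np; exists pi.
- move=> pi hpi; apply: np; exists (ctr pi).
  exact: (stat_compl hd' hpi).
Qed.

Theorem theorem2 (R : realFieldType) (N : nat) (hN : (3 <= N)%N)
  (p0 p1 p3 : R)
  (hp0 : 0 < p0 < 1) (hp1 : 0 < p1 < 1) (hp3 : 0 < p3 < 1) :
  parrondo N p0 p1 p3 <-> anti_parrondo N (1 - p3) (1 - p1) (1 - p0).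
Proof.
have N0 : (0 < N)%N by apply: leq_trans hN.
have eB : muB N (1 - p3) (1 - p1) (1 - p0) = - muB N p0 p1 p3.
  by apply: mu_dual => //; split.
have bd : forall p : R, 0 < p < 1 -> 0 < (2^-1 + p) / 2 < 1.
  move=> p hp; lra.
have eC : muC N (1 - p3) (1 - p1) (1 - p0) = - muC N p0 p1 p3.
  have b0 := bd _ hp0; have b1 := bd _ hp1; have b3 := bd _ hp3.
  by apply: mu_dual => //; split; field.
rewrite /parrondo /anti_parrondo eB eC oppr_ge0 oppr_lt0.
by [].
Qed.
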